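(* Let $\Gamma$ be a semigroup with identity $e$ and $\rho:\Gamma\to\mathrm{End}(G)$ an expansive endomorphism action with $\rho(e)=\mathrm{Id}$ on a solenoid $G$. Then for every non-zero $p\in L(G)$, the orbit $\{\rho_e(\gamma)(p):\gamma\in\Gamma\}$ is unbounded in $L(G)$.
   Context: A solenoid is a compact connected finite-dimensional metrizable abelian group; equivalently its dual $\widehat G$ is a torsion-free discrete abelian group of finite rank. $L(G)$ is the (finite-dimensional) real vector space of homomorphisms $\widehat G\to\mathbb R$, and $\rho_e(\gamma)(p)(\chi)=p(\chi\circ\rho(\gamma))$. The action is expansive if there is a neighborhood $U$ of the identity with $\bigcap_{\gamma}\rho(\gamma)^{-1}(U)=\{e\}$. *)

(* Defs.v *)
From HB Require Import structures.
From mathcomp Require Import all_boot all_order all_algebra.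
From mathcomp Require Import reals Rstruct.
Set Implicit Arguments. Unset Strict Implicit. Unset Printing Implicit Defensive.
Import Order.TTheory GRing.Theory Num.Theory.
Local Open Scope ring_scope.

(* A solenoid G is encoded through its dual group A = \hat G, a torsion-free
   abelian group of finite rank (Pontryagin duality); G = Hom(A, R/Z). *)

Definition torsion_free (A : zmodType) : Prop :=
  forall (a : A) (n : nat), a *+ n.+1 = 0 -> a = 0.

Definition finite_rank (A : zmodType) : Prop :=
  exists s : seq A, forall a : A, exists (n : nat) (c : nat -> int),
    a *+ n.+1 = \sum_(i < size s) (s`_i *~ c i).

(* R/Z is represented by [0,1) with addition modulo 1 *)
Definition frac (R : realType) (x : R) : R := x - (Num.floor x)%:~R.

Definition circ_dist (R : realType) (x : R) : R := Num.min (frac x) (1 - frac x).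

(* elements of G = Hom(A, R/Z), represented by their [0,1)-valued values *)
Definition is_char (A : zmodType) (R : realType) (g : A -> R) : Prop :=
  (forall a, 0 <= g a < 1) /\ (forall a b, g (a + b) = frac (g a + g b)).

(* U is a neighbourhood of the identity of G (dual = pointwise topology,
   basic neighbourhoods {g | forall a in F, ||g a|| < eps}) *)
Definition nbhd0 (A : zmodType) (R : realType) (U : (A -> R) -> Prop) : Prop :=
  exists (F : seq A) (eps : R), 0 < eps /\
    forall g, is_char g -> (forall a, a \in F -> circ_dist (g a) < eps) -> U g.

(* phi g is the dual endomorphism of A of rho(g) in End(G):
   rho(g)(x) = x o phi g for x in G = Hom(A,R/Z).
   Expansive: exists U nbhd of e with  bigcap_g rho(g)^{-1}(U) = {e}. *)
Definition expansive (Gam : Type) (A : zmodType) (R : realType)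
    (phi : Gam -> A -> A) : Prop :=
  exists U : (A -> R) -> Prop, nbhd0 U /\
    forall g : A -> R, is_char g ->
      (forall gam, U (fun a => g (phi gam a))) -> g = (fun _ => 0).

(* Main.v *)
Require Import Defs.
From HB Require Import structures.
From mathcomp Require Import all_boot all_order all_algebra.
From mathcomp Require Import reals Rstruct.
From mathcomp Require Import lra.
From Stdlib Require Import Classical FunctionalExtensionality.
Import Order.TTheory GRing.Theory Num.Theory.
Local Open Scope ring_scope.

Section Aux.
Variable R : realType.
Implicit Types x y : R.

Lemma fracDz x (n : int) : Defs.frac (x + n%:~R) = Defs.frac x.
Proof.
rewrite /Defs.frac floorDrz ?intr_int // intrKfloor rmorphD /=. 
by rewrite opprD addrACA subrr addr0.
Qed.

Lemma fracE x : Defs.frac x = x + (- Num.floor x)%:~R.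
Proof. by rewrite /Defs.frac rmorphN. Qed.

Lemma frac_frac x : Defs.frac (Defs.frac x) = Defs.frac x.
Proof. by rewrite {1}(fracE x) fracDz. Qed.

Lemma frac_add x y : Defs.frac (Defs.frac x + Defs.frac y) = Defs.frac (x + y).
Proof.
by rewrite (fracE x) (fracE y) addrACA -rmorphD fracDz.
Qed.


Lemma frac_pos x : 0 <= x < 1 -> Defs.frac x = x.
Proof.
move=> hx; rewrite /Defs.frac; have /eqP -> : Num.floor x == 0 by rewrite floor_eq /= add0r.
by rewrite subr0.
Qed.

Lemma frac_neg x : -1 <= x < 0 -> Defs.frac x = x + 1.
Proof.
move=> hx; rewrite /Defs.frac; have /eqP -> : Num.floor x == -1.
  by rewrite floor_eq /= addNr.
by rewrite /= opprK.
Qed.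

Lemma frac_range x : 0 <= Defs.frac x < 1.
Proof.
rewrite /Defs.frac subr_ge0 floor_le /= ltrBlDr.
by rewrite addrC -[1]/(1%:~R) -rmorphD floorD1_gt.
Qed.

Lemma circ_small x : `|x| < 1 -> circ_dist (Defs.frac x) <= `|x|.
Proof.
move=> hx; rewrite /circ_dist frac_frac.
have [x0|x0] := leP 0 x.
  rewrite frac_pos; last by rewrite x0 /=; rewrite ger0_norm in hx.
  by rewrite ger0_norm // ge_min lexx.
rewrite frac_neg; last first.
  by rewrite x0 andbT; rewrite ltr0_norm in hx => //; lra.
rewrite ltr0_norm // ge_min; apply/orP; right; lra.
Qed.

End Aux.

Theorem proposition4p4 (Gam : Type) (mul : Gam -> Gam -> Gam) (e : Gam)
    (A : zmodType) (phi : Gam -> A -> A) :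
  (forall x y z, mul x (mul y z) = mul (mul x y) z) ->
  (forall x, mul e x = x) -> (forall x, mul x e = x) ->
  torsion_free A -> finite_rank A ->
  (forall gam (x y : A), phi gam (x + y) = phi gam x + phi gam y) ->
  (forall gam del (a : A), phi (mul gam del) a = phi del (phi gam a)) ->
  (forall a, phi e a = a) ->
  @expansive Gam A Rdefinitions.R phi ->
  forall p : A -> Rdefinitions.R,
    (forall x y, p (x + y) = p x + p y) ->
    p <> (fun _ => 0) ->
    ~ (forall a : A, exists M : Rdefinitions.R, forall gam, `|p (phi gam a)| <= M).
Proof.
move=> _ _ _ _ _ phiD _ _ [U [[F [eps [eps0 HU]]] Hexp]] p pD p0 Hb.
have [M [M0 HM]] : exists M : Rdefinitions.R, 0 <= M /\
    forall a, a \in F -> forall gam, `|p (phi gam a)| <= M.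
  elim: F {HU} => [|b F [M [M0 HM]]]; first by exists 0; split.
  have [Mb HMb] := Hb b.
  exists (Num.max M Mb); split; first by rewrite le_max M0.
  move=> a; rewrite inE => /orP [/eqP -> | aF] gam.
    by rewrite le_max HMb orbT.
  by rewrite le_max HM.
have [a0 Ha0] : exists a0, p a0 <> 0.
  apply: NNPP => H; apply: p0; apply: functional_extensionality => a.
  by apply: NNPP => Ha; apply: H; exists a.
pose d : Rdefinitions.R := Num.min eps 1 / 2.
have d0 : 0 < d by rewrite /d divr_gt0 // lt_min eps0 ltr01.
have d1 : d < eps /\ d < 1.
  have := ge_min eps eps 1; have := ge_min 1 eps 1; rewrite !lexx orbT /= => _ _.
  have h1 : Num.min eps 1 <= eps by rewrite ge_min lexx.
  have h2 : Num.min eps 1 <= 1 by rewrite ge_min lexx orbT.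
  rewrite /d; lra.
pose K : Rdefinitions.R := M + `|p a0| + 1.
have K0 : 0 < K by rewrite /K; have := normr_ge0 (p a0); lra.
pose t := d / K.
have t0 : 0 < t by rewrite divr_gt0.
have tK : t * K = d by rewrite /t mulfVK // gt_eqF.
have tlt : forall y, 0 <= y -> y < K -> `|t * y| < d.
  move=> y y0 yK; rewrite ger0_norm; last by rewrite mulr_ge0 // ltW.
  by apply: (lt_le_trans (_ : t * y < t * K)); [rewrite ltr_pM2l | rewrite tK].
pose g := fun a : A => Defs.frac (t * p a).
have gchar : forall f : A -> A, (forall x y, f (x + y) = f x + f y) ->
    is_char (fun a => g (f a)).
  move=> f fD; split; first by move=> a; exact: frac_range.
  by move=> a b; rewrite /g frac_add fD pD mulrDr.
have gE : g = (fun _ => 0).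
  apply: (Hexp g (gchar id (fun _ _ => erefl))) => gam; apply: HU; first exact: gchar.
  move=> a aF; rewrite /g.
  have h : `|t * p (phi gam a)| < d.
    rewrite normrM [`|t|]ger0_norm; last exact: ltW.
  rewrite -[X in X < d]ger0_norm; last by rewrite mulr_ge0 // ltW.
    apply: tlt => //; have := HM a aF gam; rewrite /K; have := normr_ge0 (p a0); lra.
  have hx1 : `|t * p (phi gam a)| < 1 by case: d1 => _; lra.
  have := circ_small _ _ hx1; case: d1; lra.
have h0 := congr1 (fun f => f a0) gE; rewrite /g /= in h0.
have h : `|t * p a0| < d.
  rewrite normrM [`|t|]ger0_norm; last exact: ltW.
  rewrite -[X in X < d]ger0_norm; last by rewrite mulr_ge0 // ltW.
  apply: tlt => //; rewrite /K; lra.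
have [x0|x0] := leP 0 (t * p a0).
  rewrite frac_pos in h0; last by rewrite x0 /=; rewrite ger0_norm in h; lra.
  apply: Ha0; move/eqP: h0; rewrite mulf_eq0 gt_eqF //= => /eqP //.
rewrite frac_neg in h0; last by rewrite x0 andbT; rewrite ltr0_norm in h; lra.
rewrite ltr0_norm in h => //; lra.
Qed.
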